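(* Let $k\ge 4$ and let $w$ be a minimal uncompletable word for $S_k$. Then $u=ba^{k-1}$ is a prefix of $w$ and $v=b^{k-1}a$ is a suffix of $w$.
   Context: $\Sigma=\{a,b\}$. $S_k=\left(\Sigma^k\setminus\{ba^{k-1},b^{k-1}a\}\right)\cup\left(\Sigma^{k-1}\setminus\{a^{k-1},b^{k-1}\}\right)$. $\mathit{Fact}(S^* )$ is the set of all factors of words in $S^*$. A word $w\in\Sigma^*\setminus\mathit{Fact}(S_k^* )$ is uncompletable for $S_k$; a minimal uncompletable word is an uncompletable word of minimal possible length (such words exist for $k\ge 4$ since $S_k$ is then not complete). *)

(* Defs.v *)
From HB Require Import structures.
From mathcomp Require Import all_boot.
Set Implicit Arguments. Unset Strict Implicit. Unset Printing Implicit Defensive.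

Inductive letter := la | lb.

Definition letter_eqb (x y : letter) : bool :=
  match x, y with la, la => true | lb, lb => true | _, _ => false end.
Lemma letter_eqP : Equality.axiom letter_eqb.
Proof. by case; case; constructor. Qed.
HB.instance Definition _ := hasDecEq.Build letter letter_eqP.

Definition word := seq letter.

Definition inS (k : nat) (x : word) : bool :=
  ((size x == k) && (x != lb :: nseq k.-1 la) && (x != rcons (nseq k.-1 lb) la))
  || ((size x == k.-1) && (x != nseq k.-1 la) && (x != nseq k.-1 lb)).

Definition in_star (k : nat) (x : word) : Prop :=
  exists ws : seq word, all (inS k) ws /\ x = flatten ws.

Definition in_fact_star (k : nat) (w : word) : Prop :=
  exists p q : word, in_star k (p ++ w ++ q).

Definition uncompletable (k : nat) (w : word) : Prop := ~ in_fact_star k w.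

Definition minimal_uncompletable (k : nat) (w : word) : Prop :=
  uncompletable k w /\ forall w' : word, uncompletable k w' -> size w <= size w'.

(* Main.v *)
Require Import Defs.
From mathcomp Require Import all_boot.
From Stdlib Require Import Lia Classical.

Lemma cat_eq_cases {T : Type} {s1 s2 t1 t2 : seq T} :
  s1 ++ s2 = t1 ++ t2 -> exists m,
  (s1 = t1 ++ m /\ t2 = m ++ s2) \/ (t1 = s1 ++ m /\ s2 = m ++ t2).
Proof.
elim: s1 t1 => [|x s1 IH] [|y t1] /= e.
- by exists [::]; left.
- by exists (y :: t1); right.
- by exists (x :: s1); left.
- case: e => -> /IH [m [[-> ->]|[-> ->]]]; exists m; [left|right]; done.
Qed.

Lemma inS_size {k x} : inS k x -> size x <= k.
Proof.
rewrite /inS => /orP[/andP[/andP[/eqP-> _] _]|/andP[/andP[/eqP-> _] _]] //.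
exact: leq_pred.
Qed.

Lemma sz {a b c k} : a + (b + c) <= k -> 0 < a + c -> b < k.
Proof. move=> /leP h1 /ltP h2; apply/ltP; rewrite -!plusE in h1 h2; lia. Qed.

Definition decomp k (w : word) : Prop :=
  exists s0 xs s1, size s0 < k /\ size s1 < k /\ all (inS k) xs /\
    w = s0 ++ flatten xs ++ s1.

Lemma lemC {k ws} : 0 < k -> all (inS k) ws -> forall w q, w ++ q = flatten ws ->
  exists xs s1, all (inS k) xs /\ size s1 < k /\ w = flatten xs ++ s1.
Proof.
move=> hk; elim: ws => [|x ws IH] /=.
  move=> _ [|c w] q //= _; by exists [::], [::].
move=> /andP[hx hws] w q e.
have [m [[-> e2]|[ex e2]]] := cat_eq_cases e.
  have [xs [s1 [h1 [h2 ->]]]] := IH hws _ _ (esym e2).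
  by exists (x :: xs), s1; rewrite /= hx h1 catA.
case: m ex e2 => [|c m] ex e2.
  by exists [:: x], [::]; rewrite /= hx ex !cats0.
exists [::], w; split => //; split => //.
have := inS_size hx; rewrite ex size_cat /= => h.
apply: leq_trans h; by rewrite addnS ltnS leq_addr.
Qed.

Lemma lemB {k ws} : 0 < k -> all (inS k) ws -> forall p w q, p ++ w ++ q = flatten ws ->
  decomp k w.
Proof.
move=> hk; elim: ws => [|x ws IH] /=.
  move=> _ p [|c w] q; first by exists [::], [::], [::].
  by case: p.
move=> /andP[hx hws] p w q e.
have [m [[ep e2]|[ex e2]]] := cat_eq_cases e.
  exact: (IH hws m w q (esym e2)).
have [m' [[ew e3]|[em e3]]] := cat_eq_cases e2.
  have [xs [s1 [h1 [h2 em2]]]] := lemC hk hws _ _ (esym e3).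
  case: p ex e e2 => [|c p] ex e e2.
    exists [::], (x :: xs), s1; rewrite /= hx h1 ew em2 ex catA; done.
  exists m, xs, s1; rewrite ew em2; split => //.
  have := inS_size hx; rewrite ex size_cat /= => h.
  by apply: leq_trans h; rewrite ltnS leq_addl.
have := inS_size hx; rewrite ex em !size_cat => h.
case: p m' ex em e3 h e e2 => [|c p] [|c' m'] ex em e3 h e e2.
- by exists [::], [:: x], [::]; rewrite /= hx ex em /= !cats0.
- exists w, [::], [::]; split; last by rewrite /= !cats0.
  by have := sz h; apply.
- exists w, [::], [::]; split; last by rewrite /= !cats0.
  by have := sz h; apply.
- exists w, [::], [::]; split; last by rewrite /= !cats0.
  by have := sz h; apply.
Qed.

Lemma last_nseq' (T : Type) (x y : T) n : last x (nseq n.+1 y) = y.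
Proof. by elim: n. Qed.

Lemma lastn (x : letter) n : last x (nseq n x) = x.
Proof. by elim: n. Qed.

Lemma rcons_nseq (x : letter) n : rcons (nseq n x) x = nseq n.+1 x.
Proof. by elim: n => //= n ->. Qed.

Lemma lemA n w : decomp n.+4 w -> in_fact_star n.+4 w.
Proof.
move=> [s0 [xs [s1 [h0 [h1 [hx ->]]]]]].
have [j hj] : exists j, n.+4 - size s0 = j.+1.
  by exists (n.+4 - size s0).-1; rewrite prednK // subn_gt0.
have [i hi] : exists i, n.+4 - size s1 = i.+1.
  by exists (n.+4 - size s1).-1; rewrite prednK // subn_gt0.
exists (nseq j.+1 la), (nseq i.+1 lb).
have hs0 : size (nseq j.+1 la ++ s0) = n.+4.
  by rewrite size_cat size_nseq -hj subnK // ltnW.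
have hs1 : size (s1 ++ nseq i.+1 lb) = n.+4.
  by rewrite size_cat size_nseq -hi addnC subnK // ltnW.
exists ((nseq j.+1 la ++ s0) :: xs ++ [:: s1 ++ nseq i.+1 lb]); split.
  rewrite [all _ _]/= all_cat hx [all _ [:: _]]/= andbT; apply/andP; split.
    by rewrite /inS hs0 eqxx.
  rewrite /inS hs1 eqxx /=.
  apply/orP; left; apply/andP; split; apply/negP => /eqP /(congr1 (last la));
    by rewrite last_cat /= ?last_rcons !lastn.
by rewrite -cat1s !flatten_cat /= !cats0 !catA.
Qed.

Theorem theorem2 (k : nat) (w : word) :
  4 <= k -> minimal_uncompletable k w ->
  prefix (lb :: nseq k.-1 la) w /\ suffix (rcons (nseq k.-1 lb) la) w.
Proof.
case: k => [|[|[|[|n]]]] // _ [hu hmin].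
set k := n.+4.
have short : forall w', size w' < size w -> decomp k w'.
  move=> w' hs; apply: NNPP => hd.
  have : uncompletable k w'.
    move=> [p [q [ws [ha e]]]]; apply: hd; exact: (lemB (isT : 0 < k) ha _ _ _ e).
  by move/hmin; rewrite leqNgt hs.
have nd : ~ decomp k w by move/lemA.
split.
- case: w hu hmin short nd => [|c w1] hu hmin short nd.
    by exfalso; apply: nd; exists [::], [::], [::].
  have [s0 [xs [s1 [h0 [h1 [hx e]]]]]] := short w1 (ltnSn _).
  case: (ltnP (size s0).+1 k) => hs.
    by exfalso; apply: nd; exists (c :: s0), xs, s1; rewrite e.
  have hs0 : size s0 = n.+3 by apply/eqP; rewrite eqn_leq -ltnS h0.
  case hin: (inS k (c :: s0)).
    exfalso; apply: nd; exists [::], ((c :: s0) :: xs), s1.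
    do 2 (split => //); split; [by rewrite /= hin hx | by rewrite e /= catA].
  move: hin; rewrite /inS /k [size _]/= hs0 eqxx (gtn_eqF (ltnSn _)) /= orbF => /negbT.
  rewrite negb_and !negbK => /orP[/eqP eu|/eqP ev].
    by rewrite e; case: eu => <- <-; rewrite eqxx prefix_prefix.
  case: ev => ec es0; exfalso; apply: nd; rewrite ec.
  exists [:: lb], (s0 :: xs), s1; split => //; split => //; split; last by rewrite e /= catA.
  rewrite [all _ _]/= hx andbT es0 /inS; apply/orP; right.
  rewrite /k /= size_rcons size_nseq eqxx /=.
  apply/negP => /eqP /(congr1 (last la)).
  by rewrite ?last_rcons /= ?last_rcons ?lastn.
- case/lastP: w hu hmin short nd => [|w1 c] hu hmin short nd.
    by exfalso; apply: nd; exists [::], [::], [::].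
  have hw1 : size w1 < size (rcons w1 c) by rewrite size_rcons.
  have [s0 [xs [s1 [h0 [h1 [hx e]]]]]] := short w1 hw1.
  case: (ltnP (size s1).+1 k) => hs.
    by exfalso; apply: nd; exists s0, xs, (rcons s1 c); rewrite e size_rcons -!cats1 !catA.
  have hs1 : size s1 = n.+3 by apply/eqP; rewrite eqn_leq -ltnS h1.
  case hin: (inS k (rcons s1 c)).
    exfalso; apply: nd; exists s0, (rcons xs (rcons s1 c)), [::].
    by rewrite all_rcons hin hx flatten_rcons e cats0 -!cats1 !catA.
  move: hin; rewrite /inS /k size_rcons hs1 eqxx (gtn_eqF (ltnSn _)) !andFb orbF andTb => /negbT.
  rewrite negb_and !negbK => /orP[/eqP eu|/eqP ev]; last first.
    by rewrite e !rcons_cat ev catA suffix_suffix.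
  exfalso.
  have : rcons s1 c = rcons (lb :: nseq n.+2 la) la by rewrite eu /= rcons_nseq.
  move/eqP; rewrite eqseq_rcons => /andP[/eqP es1 /eqP ec]; apply: nd.
  exists s0, (rcons xs s1), [:: la]; split => //; split => //; split;
    last by rewrite e ec flatten_rcons -cats1 !catA.
  rewrite all_rcons hx andbT es1 /inS /k; apply/orP; right.
  by rewrite /= size_nseq eqxx.
Qed.
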